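(* Let $\mathcal{H}^S$ and $\mathcal{H}^A$ be $d$-dimensional Hilbert spaces with fixed orthonormal bases. There exists an isometry $W:\mathcal{H}^S\to\mathcal{H}^S\otimes\mathcal{H}^A$ such that for every state $\rho^S$ on $\mathcal{H}^S$, \[ \mathcal{L}_C(\rho^S)=\mathcal{L}_E(W\rho^SW^\dagger). \]
   Context: The coherence rank $R_C(|\psi\rangle)$ of a pure state $|\psi\rangle\in\mathcal{H}^S$ is the number of nonzero coefficients of $|\psi\rangle$ in the fixed basis; $\mathcal{L}_C(|\psi\rangle)=\log_2R_C(|\psi\rangle)$; for a state $\rho$, $\mathcal{L}_C(\rho)=\min\sum_ip_i\mathcal{L}_C(|\psi_i\rangle)$ over all pure-state decompositions $\rho=\sum_ip_i|\psi_i\rangle\langle\psi_i|$. For a bipartite pure state $|\psi^{SA}\rangle$ with Schmidt rank $r$, $\mathcal{L}_E(|\psi^{SA}\rangle)=\log_2r$, and for a bipartite state $\rho^{SA}$, $\mathcal{L}_E(\rho^{SA})=\min\sum_ip_i\mathcal{L}_E(|\psi_i^{SA}\rangle)$ over all pure-state decompositions of $\rho^{SA}$. *)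

(* Defs.v *)
From HB Require Import structures.
From mathcomp Require Import all_boot all_order all_algebra.
From mathcomp Require Import all_classical all_reals.
From mathcomp Require Import exp.
From mathcomp Require Import complex.
Set Implicit Arguments. Unset Strict Implicit. Unset Printing Implicit Defensive.
Import Order.TTheory GRing.Theory Num.Theory.
Local Open Scope ring_scope.
Local Open Scope classical_set_scope.

Section QDefs.
Variable R : realType.
Local Notation C := R[i].

Definition adjmx (m n : nat) (A : 'M[C]_(m, n)) : 'M[C]_(n, m) :=
  (map_mx (@conjc R) A)^T.

Definition log2 (x : R) : R := ln x / ln 2.

Definition is_state (m : nat) (rho : 'M[C]_m) : Prop :=
  (forall v : 'cV[C]_m, 0 <= (adjmx v *m rho *m v) 0 0) /\ \tr rho = 1.

Definition is_isometry (m n : nat) (W : 'M[C]_(m, n)) : Prop :=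
  adjmx W *m W = 1%:M.

Definition is_unit_vec (m : nat) (v : 'cV[C]_m) : Prop :=
  (adjmx v *m v) 0 0 = 1.

Definition pure_decomp (m : nat) (rho : 'M[C]_m) (k : nat)
  (p : 'I_k -> R) (psi : 'I_k -> 'cV[C]_m) : Prop :=
  [/\ forall i, 0 <= p i, \sum_i p i = 1, forall i, is_unit_vec (psi i)
    & rho = \sum_i (((p i)%:C)%C *: (psi i *m adjmx (psi i)))].

Definition convex_roof (m : nat) (f : 'cV[C]_m -> R) (rho : 'M[C]_m) : R :=
  inf [set x : R | exists k (p : 'I_k -> R) (psi : 'I_k -> 'cV[C]_m),
         pure_decomp rho p psi /\ x = \sum_i p i * f (psi i)].

Definition coh_rank (m : nat) (v : 'cV[C]_m) : nat :=
  #|[set i : 'I_m | v i 0 != 0]|.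

Definition LC_pure (m : nat) (v : 'cV[C]_m) : R := log2 (coh_rank v)%:R.
Definition LC (m : nat) (rho : 'M[C]_m) : R := convex_roof (@LC_pure m) rho.

(* Bipartite space H^S (x) H^A = C^(d*d), with basis |i>|j> at index
   mxvec_index i j.  The coefficient matrix of psi is M_ij = psi_(ij);
   the Schmidt rank of psi is the rank of M. *)
Definition coef_mx (d : nat) (psi : 'cV[C]_(d * d)) : 'M[C]_(d, d) :=
  vec_mx psi^T.
Definition schmidt_rank (d : nat) (psi : 'cV[C]_(d * d)) : nat :=
  \rank (coef_mx psi).

Definition LE_pure (d : nat) (v : 'cV[C]_(d * d)) : R :=
  log2 (schmidt_rank v)%:R.
Definition LE (d : nat) (rho : 'M[C]_(d * d)) : R :=
  convex_roof (@LE_pure d) rho.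

End QDefs.

(* Main.v *)
Require Import Defs.
From HB Require Import structures.
From mathcomp Require Import all_boot all_order all_algebra.
From mathcomp Require Import all_classical all_reals.
From mathcomp Require Import exp.
From mathcomp Require Import complex.
Import Order.TTheory GRing.Theory Num.Theory.
Local Open Scope ring_scope.

Lemma rank_diag (F : fieldType) n (d : 'rV[F]_n) :
  \rank (diag_mx d) = (\sum_i nat_of_bool (d 0%R i != 0%R))%N.
Proof.
elim: n d => [|n IH] d.
  by rewrite big_ord0; apply/eqP; rewrite -leqn0 rank_leq_row.
 move: d; rewrite -[n.+1]/(1 + n)%N => d.
rewrite -[d]hsubmxK; move: (lsubmx d) (rsubmx d) => l r.
rewrite diag_mx_row rank_diag_block_mx IH big_ord_recl.
congr addn.
  have -> : row_mx l r 0 ord0 = l 0 0.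
    by rewrite (_ : ord0 = lshift n (0 : 'I_1)) ?row_mxEl //; apply/val_inj.
  have -> : diag_mx l = (l 0 0)%:M.
    by apply/matrixP => i j; rewrite !ord1 !mxE.
  have [->|an] := eqVneq (l 0 0) 0; first by rewrite raddf0 mxrank0.
  by rewrite mxrank_unit ?an // unitmxE det_scalar expr1 unitfE.
apply: eq_bigr => i _.
by rewrite (_ : lift ord0 i = rshift 1 i) ?row_mxEr //; apply/val_inj.
Qed.

Section P.
Variable R : realType.
Local Notation C := R[i].

Lemma mxvec_index_inj m n (i i' : 'I_m) (j j' : 'I_n) :
  mxvec_index i j = mxvec_index i' j' -> (i, j) = (i', j').
Proof. by rewrite /mxvec_index => /cast_ord_inj /enum_rank_inj. Qed.

Lemma mxvec_index_eq n (a b : 'I_n) :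
  (mxvec_index a a == mxvec_index b b) = (a == b).
Proof. by apply/eqP/eqP => [/mxvec_index_inj [] | ->]. Qed.

Definition Wd d : 'M[C]_(d * d, d) := \matrix_(k, j) ((k == mxvec_index j j)%:R).

Lemma adjmxE m n (A : 'M[C]_(m, n)) i j : adjmx A i j = conjc (A j i).
Proof. by rewrite !mxE. Qed.

Lemma adjmxM m n p (A : 'M[C]_(m, n)) (B : 'M[C]_(n, p)) :
  adjmx (A *m B) = adjmx B *m adjmx A.
Proof. by rewrite /adjmx map_mxM trmx_mul. Qed.

Lemma adjmxK m n (A : 'M[C]_(m, n)) : adjmx (adjmx A) = A.
Proof. by apply/matrixP => i j; rewrite !adjmxE conjcK. Qed.

Lemma W_mul_at d (u : 'cV[C]_d) a b :
  (Wd d *m u) (mxvec_index a b) 0 = (a == b)%:R * u a 0.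
Proof.
rewrite mxE; have [<-|nab] := eqVneq a b.
  rewrite (bigD1 a) //= mxE eqxx mul1r big1 ?addr0 ?mul1r // => j ja.
  by rewrite mxE mxvec_index_eq eq_sym (negPf ja) mul0r.
rewrite mul0r big1 // => j _; rewrite mxE.
case: eqP => [/mxvec_index_inj [e1 e2]|_]; last by rewrite mul0r.
by move: nab; rewrite e1 e2 eqxx.
Qed.

Lemma W_row0 d n k (Hk : forall j, k != mxvec_index j j) (X : 'M[C]_(d, n)) a :
  (Wd d *m X) k a = 0.
Proof. by rewrite mxE big1 // => j _; rewrite mxE (negPf (Hk j)) mul0r. Qed.

Lemma Wadj_mul d (phi : 'cV[C]_(d * d)) j :
  (adjmx (Wd d) *m phi) j 0 = phi (mxvec_index j j) 0.
Proof.
rewrite mxE (bigD1 (mxvec_index j j)) //= big1 ?addr0.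
  by rewrite adjmxE mxE eqxx conjc1 mul1r.
by move=> k nk; rewrite adjmxE mxE (negPf nk) conjc0 mul0r.
Qed.

Lemma W_iso d : adjmx (Wd d) *m Wd d = 1%:M.
Proof.
apply/matrixP => a b; rewrite mxE (bigD1 (mxvec_index a a)) //= big1 ?addr0.
  by rewrite adjmxE !mxE eqxx conjc1 mul1r mxvec_index_eq.
by move=> k nk; rewrite adjmxE mxE (negPf nk) conjc0 mul0r.
Qed.

Lemma unit_W d (v : 'cV[C]_d) : adjmx (Wd d *m v) *m (Wd d *m v) = adjmx v *m v.
Proof. by rewrite adjmxM mulmxA -(mulmxA (adjmx v)) W_iso mulmx1. Qed.

Lemma schmidt_W d (v : 'cV[C]_d) : schmidt_rank (Wd d *m v) = coh_rank v.
Proof.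
rewrite /schmidt_rank.
have -> : coef_mx (Wd d *m v) = diag_mx v^T.
  apply/matrixP => a b; rewrite /coef_mx [vec_mx _ a b]mxE mxE W_mul_at !mxE.
  by case: eqP => [->|]; rewrite ?mul1r ?mul0r ?mulr1n ?mulr0n.
rewrite rank_diag /coh_rank -sum1_card [RHS]big_mkcond /=.
apply: eq_bigr => i _; rewrite mxE; case: ifPn; rewrite unfold_in /in_set; first by move=> /asboolP ->.
move=> /negP H; case: (boolP (v i 0 != 0)) => // H'; case: H; exact/asboolP.
Qed.

Lemma LE_W d (v : 'cV[C]_d) : LE_pure (Wd d *m v) = LC_pure v.
Proof. by rewrite /LE_pure /LC_pure schmidt_W. Qed.

Lemma sum_conj m n m' k (A : 'M[C]_(m, n)) (B : 'M[C]_(n, m')) (c : 'I_k -> C) X :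
  A *m (\sum_i c i *: X i) *m B = \sum_i c i *: (A *m X i *m B).
Proof.
rewrite mulmx_sumr mulmx_suml; apply: eq_bigr => i _.
by rewrite scalemxAl -scalemxAr.
Qed.

End P.

Theorem proposition6 (R : realType) (d : nat) :
  exists W : 'M[R[i]]_(d * d, d),
    is_isometry W /\
    forall rho : 'M[R[i]]_d, is_state rho ->
      LC rho = LE (W *m rho *m adjmx W).
Proof.
exists (Wd R d); split; first exact: W_iso.
move=> rho [_ Htr].
case: d rho Htr => [|d] rho Htr.
  by move: Htr; rewrite /mxtrace big_ord0 => /eqP; rewrite eq_sym oner_eq0.
set W := Wd R d.+1.
rewrite /LC /LE /convex_roof; congr inf.
apply/seteqP; split => x /=.
  move=> [k [p [psi [[Hp Hs Hu Hrho] ->]]]].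
  exists k, p, (fun i => W *m psi i); split; [split|] => //.
  - by move=> i; rewrite /is_unit_vec unit_W; exact: Hu.
  - rewrite Hrho sum_conj; apply: eq_bigr => i _.
    by rewrite adjmxM !mulmxA.
  - by apply: eq_bigr => i _; rewrite LE_W.
move=> [k [p [phi [[Hp Hs Hu Hrho] ->]]]].
have Hsupp : forall i, p i != 0 -> forall k0 : 'I_(d.+1 * d.+1),
    (forall j, k0 != mxvec_index j j) -> phi i k0 0 = 0.
  move=> i pi k0 Hk0.
  have E := congr1 (fun M : 'M_(d.+1 * d.+1) => M k0 k0) Hrho.
  move: E => /=; rewrite mxE big1; last first.
    by move=> a _; rewrite W_row0 // mul0r.
  rewrite summxE => /esym /eqP.
  rewrite psumr_eq0; last first.
    move=> j _; rewrite !mxE big_ord1 adjmxE.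
    by apply: mulr_ge0; [rewrite ler0c | exact: mulcJ_ge0].
  move=> /allP /(_ i (mem_index_enum _)) /=.
  rewrite !mxE big_ord1 adjmxE mulf_eq0 => /orP [|].
    by rewrite fmorph_eq0 (negPf pi).
  by rewrite mulf_eq0 conjc_eq0 orbb => /eqP.
have Hphi : forall i, p i != 0 -> phi i = W *m (adjmx W *m phi i).
  move=> i pi; apply/matrixP => k0 c; rewrite ord1.
  case/mxvec_indexP: k0 => a b; rewrite W_mul_at Wadj_mul.
  have [->|nab] := eqVneq a b; first by rewrite mul1r.
  rewrite mul0r; apply: Hsupp => // j; apply/eqP => /mxvec_index_inj [e1 e2].
  by move: nab; rewrite e1 e2 eqxx.
pose e0 : 'cV[R[i]]_d.+1 := delta_mx 0 0.
have He0 : is_unit_vec e0.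
  rewrite /is_unit_vec mxE (bigD1 0) //= big1 ?addr0.
    by rewrite adjmxE !mxE eqxx conjc1 mul1r.
  by move=> j nj; rewrite !mxE (negPf nj) /= mulr0.
pose psi i := if p i == 0 then e0 else adjmx W *m phi i.
exists k, p, psi; split; [split|] => //.
- move=> i; rewrite /psi; case: eqP => // /eqP pi.
  by have := Hu i; rewrite /is_unit_vec {1 2}(Hphi i pi) unit_W.
- have -> : rho = adjmx W *m (W *m rho *m adjmx W) *m W.
    by rewrite !mulmxA W_iso mul1mx -mulmxA W_iso mulmx1.
  rewrite Hrho sum_conj; apply: eq_bigr => i _.
  rewrite /psi; case: eqP => [->|_]; first by rewrite rmorph0 !scale0r.
  by rewrite adjmxM adjmxK !mulmxA.
- apply: eq_bigr => i _; rewrite /psi; case: eqP => [->|/eqP pi].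
    by rewrite !mul0r.
  by rewrite {1}(Hphi i pi) LE_W.
Qed.
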